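(* Let $X,Y$ be real $m\times n$ matrices with $\|X\|_\infty\le1$ and $\|Y\|_\infty\le1$. Let $q\ge1$ be such that $\|X\|_*\le q\sqrt{mn}$ and $\|Y\|_*\le q\sqrt{mn}$. Let $\varepsilon\in(0,1)$. Then there exist $m\times n$ matrices $A,B$ with a simultaneous block structure having at most $(20000q^6\varepsilon^{-10})^{5q^2\varepsilon^{-2}}$ blocks, and permutations $\pi$ of $\{1,\dots,m\}$ and $\tau$ of $\{1,\dots,n\}$, such that $\|X^{\pi,\tau}-A\|_{\bar F}\le\varepsilon$ and $\|Y^{\pi,\tau}-B\|_{\bar F}\le\varepsilon$. Moreover, $A,B$ can be chosen with $\|A\|_\infty\le1$ and $\|B\|_\infty\le1$.
   Context: $\|A\|_\infty=\max_{i,j}|a_{ij}|$; $\|A\|_*$ is the sum of singular values; $\|A\|_{\bar F}=\big(\frac1{mn}\sum_{i,j}a_{ij}^2\big)^{1/2}$. $X^{\pi,\tau}$ is the matrix with $(i,j)$ entry $x_{\pi(i)\tau(j)}$. A matrix is a block matrix if its entries are constant on rectangular blocks, i.e. the set of rows is partitioned into consecutive intervals and the set of columns into consecutive intervals, and the matrix is constant on each product of a row interval with a column interval (these products are the blocks). Two matrices have a simultaneous block structure if both are block matrices with respect to the same row and column partitions. *)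

(* Defs.v *)
From HB Require Import structures.
From mathcomp Require Import all_boot all_order all_algebra all_fingroup.
From mathcomp Require Import boolp classical_sets reals exp.
Set Implicit Arguments. Unset Strict Implicit. Unset Printing Implicit Defensive.
Import Order.TTheory GRing.Theory Num.Theory.
Local Open Scope ring_scope.

Section Defs.
Variable R : realType.

(* max-entry norm ||A||_oo = max_{i,j} |a_ij| (0 for empty matrices) *)
Definition maxnorm m n (A : 'M[R]_(m, n)) : R :=
  \big[Num.max/0]_(i < m) \big[Num.max/0]_(j < n) `|A i j|.

Definition fbarnorm m n (A : 'M[R]_(m, n)) : R :=
  Num.sqrt ((m * n)%:R^-1 * \sum_(i < m) \sum_(j < n) A i j ^+ 2).

(* s is the list (with multiplicity) of the singular values of A :
   nonnegative reals whose squares are the eigenvalues (roots of the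
   characteristic polynomial, with multiplicity) of A^T A. *)
Definition is_singular_values m n (A : 'M[R]_(m, n)) (s : seq R) : Prop :=
  all (fun x => 0 <= x) s /\
  char_poly (A^T *m A) = \prod_(x <- s) ('X - (x ^+ 2)%:P).

Definition nucnorm m n (A : 'M[R]_(m, n)) : R :=
  \sum_(x <- xget [::] [set s | is_singular_values A s]) x.

Definition permmx m n (X : 'M[R]_(m, n)) (pi : {perm 'I_m}) (tau : {perm 'I_n})
  : 'M[R]_(m, n) := \matrix_(i, j) X (pi i) (tau j).

(* a labelling of 'I_m by interval indices that is nondecreasing: its
   fibres are consecutive intervals partitioning the index set *)
Definition interval_labelling m a (f : 'I_m -> 'I_a) : Prop :=
  forall i j : 'I_m, (i <= j)%N -> (f i <= f j)%N.

(* A and B have a simultaneous block structure with at most N blocks: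
   a common partition of the rows into (at most) a consecutive intervals and
   of the columns into (at most) b consecutive intervals, with a * b <= N,
   such that both A and B are constant on each block. *)
Definition simul_block_structure m n (A B : 'M[R]_(m, n)) (N : R) : Prop :=
  exists (a b : nat) (f : 'I_m -> 'I_a) (g : 'I_n -> 'I_b),
    [/\ interval_labelling f, interval_labelling g,
        (forall i i' j j', f i = f i' -> g j = g j' ->
            A i j = A i' j' /\ B i j = B i' j')
      & (a * b)%:R <= N].

End Defs.

(* Main.v *)
Require Import Defs.
From HB Require Import structures.
From mathcomp Require Import all_boot all_order all_algebra all_fingroup.
From mathcomp Require Import boolp classical_sets reals exp.
Import Order.TTheory GRing.Theory Num.Theory.
Local Open Scope ring_scope.
From mathcomp Require Import ring lra.
From mathcomp Require complex spectral.
Set Implicit Arguments. Unset Strict Implicit. Unset Printing Implicit Defensive.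

Module PartA.
Import complex spectral.
Import Num.Def.

Section Cx.
Variable R : rcfType.
Local Open Scope complex_scope.

Lemma sumCx (I : Type) (r : seq I) (F G : I -> R) :
  \sum_(i <- r) (Complex (F i) (G i) : R[i]) = Complex (\sum_(i <- r) F i) (\sum_(i <- r) G i).
Proof.
elim: r => [|x r IH]; first by rewrite !big_nil.
by rewrite !big_cons IH.
Qed.

Lemma mulCx (a b c d : R) : (Complex a b : R[i]) * Complex c d = Complex (a * c - b * d) (a * d + b * c).
Proof. by []. Qed.

Lemma conjCx (a b : R) : conjC (Complex a b : R[i]) = Complex a (- b).
Proof. by []. Qed.

Lemma etaCx (z : R[i]) : z = Complex (complex.Re z) (complex.Im z).
Proof. by case: z. Qed.

Lemma realCx (x : R) : x%:C = Complex x 0.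
Proof. by []. Qed.

Lemma oneCx : (1 : R[i]) = Complex 1 0. Proof. by []. Qed.
Lemma zeroCx : (0 : R[i]) = Complex 0 0. Proof. by []. Qed.

End Cx.

Lemma char_poly_conj (F : comNzRingType) n (Q P D : 'M[F]_n) :
  Q *m P = 1%:M -> char_poly (Q *m D *m P) = char_poly D.
Proof.
move=> QP.
pose Qp := map_mx polyC Q; pose Pp := map_mx polyC P.
have QPp : Qp *m Pp = 1%:M by rewrite -map_mxM QP map_mx1.
have E : char_poly_mx (Q *m D *m P) = Qp *m char_poly_mx D *m Pp.
  rewrite /char_poly_mx !map_mxM mulmxBr mulmxBl -/Qp -/Pp.
  by congr (_ - _); rewrite scalar_mxC -mulmxA -map_mxM QP map_mx1 mulmx1.
rewrite /char_poly E !det_mulmx mulrAC -det_mulmx.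
by rewrite /Qp /Pp -map_mxM QP map_mx1 det1 mul1r.
Qed.

Definition wco (R : realType) m n (X : 'M[R]_(m,n)) (a : 'I_n -> 'I_n -> R)
  (i : 'I_m) (l : 'I_n) : R := \sum_j X i j * a l j.

Section Spec.
Variable R : realType.
Local Open Scope complex_scope.
Local Open Scope sesquilinear_scope.

Definition cmx m n (X : 'M[R]_(m,n)) : 'M[R[i]]_(m,n) := map_mx (real_complex R) X.

Lemma cmx_conj m n (X : 'M[R]_(m,n)) : map_mx conjC (cmx X) = cmx X.
Proof. apply/matrixP => i j; rewrite !mxE; exact: conjc_real. Qed.

Variables (m n : nat) (X : 'M[R]_(m,n)).
Let Xc := cmx X.
Let Gc := Xc^T *m Xc.

Lemma Xc_adj : Xc ^t* = Xc^T.
Proof. apply/matrixP => i j; rewrite !mxE; exact: conjc_real. Qed.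

Lemma Gc_adj : Gc ^t* = Gc.
Proof.
by rewrite /Gc trmx_mul trmxK map_mxM -map_trmx /Xc cmx_conj.
Qed.

Lemma Gc_normal : Gc \is normalmx.
Proof. by apply/normalmxP; rewrite Gc_adj. Qed.

Let P := spectralmx Gc.
Let sp := spectral_diag Gc.

Lemma Gc_eq : Gc = P^t* *m diag_mx sp *m P.
Proof.
rewrite -invmx_unitary ?spectral_unitarymx //.
by move/orthomx_spectralP: Gc_normal.
Qed.

Lemma PPt : P *m P^t* = 1%:M.
Proof. exact/unitarymxP/spectral_unitarymx. Qed.

Lemma PtP : P^t* *m P = 1%:M.
Proof. by rewrite -invmx_unitary ?spectral_unitarymx // mulVmx // spectral_unit. Qed.

Let W := Xc *m P^t*.

Lemma W1 : W^t* *m W = diag_mx sp.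
Proof.
rewrite /W trmx_mul map_mxM trmxCK Xc_adj.
rewrite mulmxA -(mulmxA P) -/Xc -/Gc Gc_eq.
by rewrite !mulmxA PPt mul1mx -!mulmxA PPt mulmx1.
Qed.

Lemma W2 : W *m P = Xc.
Proof. by rewrite /W -mulmxA PtP mulmx1. Qed.

Lemma W3 : Xc^T *m W = P^t* *m diag_mx sp.
Proof.
by rewrite /W mulmxA -/Gc Gc_eq -!mulmxA PPt mulmx1.
Qed.

Let a (l j : 'I_n) := complex.Re (P l j).
Let b (l j : 'I_n) := complex.Im (P l j).
Let wa i l := \sum_j X i j * a l j.
Let wb i l := \sum_j X i j * b l j.
Let d l := complex.Re (sp 0 l).

Lemma FW i l : W i l = Complex (wa i l) (- wb i l).
Proof.
rewrite /W !mxE /wa /wb -sumrN -sumCx; apply: eq_bigr => j _.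
rewrite !mxE [P l j]etaCx realCx conjCx mulCx /a /b.
by congr Complex; rewrite mul0r ?subr0 ?addr0 // mulrN.
Qed.

Lemma F1 i j : X i j = \sum_l (wa i l * a l j + wb i l * b l j).
Proof.
have E : (W *m P) i j = Complex (\sum_l (wa i l * a l j + wb i l * b l j))
                            (\sum_l (wa i l * b l j + - wb i l * a l j)).
  rewrite mxE -sumCx; apply: eq_bigr => l _.
  by rewrite FW [P l j]etaCx mulCx mulNr opprK.
by move: (congr1 (@complex.Re R) E); rewrite W2 /Xc /cmx mxE.
Qed.

Lemma F2 l : \sum_i (wa i l ^+ 2 + wb i l ^+ 2) = d l /\ complex.Im (sp 0 l) = 0.
Proof.
have E : (W^t* *m W) l l = Complex (\sum_i (wa i l ^+ 2 + wb i l ^+ 2)) (\sum_(i < m) (0:R)).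
  rewrite mxE -sumCx; apply: eq_bigr => i _.
  have -> : (W ^t* ) l i = conjC (W i l) by rewrite !mxE.
  rewrite FW conjCx opprK mulCx.
  by congr Complex; rewrite ?mulrN ?opprK // (mulrC (wb i l)) addNr.
rewrite W1 mxE eqxx mulr1n big1_eq in E.
by rewrite /d E.
Qed.

Lemma d_ge0 l : 0 <= d l.
Proof.
by rewrite -(proj1 (F2 l)); apply: sumr_ge0 => i _; rewrite addr_ge0 ?sqr_ge0.
Qed.

Lemma sp_real l : sp 0 l = (d l)%:C.
Proof. by rewrite [sp 0 l]etaCx (proj2 (F2 l)). Qed.

Lemma F3 j l : \sum_i X i j * wa i l = a l j * d l /\ \sum_i X i j * wb i l = b l j * d l.
Proof.
have E : (Xc^T *m W) j l = Complex (\sum_i X i j * wa i l) (- \sum_i X i j * wb i l).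
  rewrite mxE -sumrN -sumCx; apply: eq_bigr => i _.
  have -> : Xc^T j i = (X i j)%:C by rewrite !mxE.
  rewrite FW realCx mulCx.
  by congr Complex; rewrite ?mul0r ?subr0 ?addr0 ?mulrN.
rewrite W3 mul_mx_diag mxE sp_real !mxE [P l j]etaCx conjCx realCx mulCx in E.
case: E => E1 E2; split; first by rewrite -E1; ring.
by apply: oppr_inj; rewrite -E2; ring.
Qed.

Lemma F4 l : \sum_j (a l j ^+ 2 + b l j ^+ 2) = 1.
Proof.
have E : (P *m P^t*) l l = Complex (\sum_j (a l j ^+ 2 + b l j ^+ 2)) (\sum_(j < n) (0:R)).
  rewrite mxE -sumCx; apply: eq_bigr => j _.
  rewrite !mxE [P l j]etaCx conjCx mulCx.
  by congr Complex; ring.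
by move: (congr1 (@complex.Re R) E); rewrite PPt mxE eqxx.
Qed.

Lemma F5 i (T : pred 'I_n) :
  \sum_j (\sum_(l | T l) (wa i l * a l j + wb i l * b l j)) ^+ 2
  <= \sum_(l | T l) (wa i l ^+ 2 + wb i l ^+ 2).
Proof.
pose z : 'rV[R[i]]_n := \row_l (if T l then W i l else 0).
pose E := z *m P.
have zE l : z 0 l = if T l then W i l else 0 by rewrite mxE.
pose x j := \sum_l (if T l then wa i l * a l j + wb i l * b l j else 0).
pose y j := \sum_l (if T l then wa i l * b l j - wb i l * a l j else 0).
have HE j : E 0 j = Complex (x j) (y j).
  rewrite mxE -sumCx; apply: eq_bigr => l _; rewrite zE.
  case: (T l); last by rewrite mul0r.
  by rewrite FW [P l j]etaCx mulCx; congr Complex; rewrite /a /b; ring.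
have H1 : (E *m E^t* ) 0 0 = Complex (\sum_l (if T l then wa i l ^+ 2 + wb i l ^+ 2 else 0)) (\sum_(l < n) (0:R)).
  rewrite /E trmx_mul map_mxM !mulmxA -(mulmxA z P) PPt mulmx1.
  rewrite mxE -sumCx; apply: eq_bigr => l _.
  have -> : (z ^t* ) l 0 = conjC (z 0 l) by rewrite !mxE.
  rewrite zE; case: (T l); last by rewrite mul0r.
  by rewrite FW conjCx mulCx; congr Complex; ring.
have H2 : (E *m E^t* ) 0 0 = Complex (\sum_j (x j ^+ 2 + y j ^+ 2)) (\sum_(j < n) (0:R)).
  rewrite mxE -sumCx; apply: eq_bigr => j _.
  have -> : (E ^t* ) j 0 = conjC (E 0 j) by rewrite !mxE.
  by rewrite HE conjCx mulCx; congr Complex; ring.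
have := congr1 (@complex.Re R) (etrans (esym H1) H2); rewrite /= => H3.
rewrite [X in _ <= X]big_mkcond H3.
apply: ler_sum => j _; rewrite /x -big_mkcond.
by rewrite lerDl sqr_ge0.
Qed.

Lemma char_G : char_poly (X^T *m X) = \prod_l ('X - (d l)%:P).
Proof.
apply: (map_poly_inj (real_complex R)).
rewrite map_char_poly map_mxM -map_trmx -/(cmx X) -/Xc -/Gc Gc_eq char_poly_conj ?PtP //.
rewrite char_poly_trig ?diag_mx_is_trig // rmorph_prod; apply: eq_bigr => l _.
by rewrite rmorphB /= map_polyX map_polyC /= mxE eqxx mulr1n sp_real.
Qed.

Lemma nuc_eq : nucnorm X = \sum_l Num.sqrt (d l).
Proof.
have Hs : is_singular_values X [seq Num.sqrt (d l) | l <- enum 'I_n].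
  split; first by apply/allP => x /mapP [l _ ->]; rewrite sqrtr_ge0.
  rewrite char_G big_map big_enum /=; apply: eq_bigr => l _.
  by rewrite sqr_sqrtr ?d_ge0.
rewrite /nucnorm.
set s := xget _ _.
have [Hs0 Hs1] : is_singular_values X s by apply: (xgetPex [::]); exists [seq Num.sqrt (d l) | l <- enum 'I_n].
have Hp : perm_eq [seq x ^+ 2 | x <- s] [seq d l | l <- enum 'I_n].
  apply: prod_XsubC_eq; rewrite big_map -Hs1 char_G big_map big_enum /=.
  done.
have -> : \sum_l Num.sqrt (d l) = \sum_(y <- [seq d l | l <- enum 'I_n]) Num.sqrt y.
  by rewrite big_map big_enum.
rewrite -(perm_big _ Hp) big_map; apply: eq_big_seq => x xs.
by rewrite sqrtr_sqr ger0_norm //; move/allP: Hs0; apply.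
Qed.

Lemma frame_ex : exists (d : 'I_n -> R) (a b : 'I_n -> 'I_n -> R),
  (forall l, 0 <= d l) /\ nucnorm X = \sum_l Num.sqrt (d l) /\
  (forall i j, X i j = \sum_l (wco X a i l * a l j + wco X b i l * b l j)) /\
  (forall l, \sum_i (wco X a i l ^+ 2 + wco X b i l ^+ 2) = d l) /\
  (forall j l, \sum_i X i j * wco X a i l = a l j * d l /\
               \sum_i X i j * wco X b i l = b l j * d l) /\
  (forall l, \sum_j (a l j ^+ 2 + b l j ^+ 2) = 1) /\
  (forall i (T : pred 'I_n),
    \sum_j (\sum_(l | T l) (wco X a i l * a l j + wco X b i l * b l j)) ^+ 2
    <= \sum_(l | T l) (wco X a i l ^+ 2 + wco X b i l ^+ 2)).
Proof.
exists d, a, b; split; first exact: d_ge0.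
split; first exact: nuc_eq.
split; first exact: F1.
split; first by move=> l; exact: (proj1 (F2 l)).
split; first exact: F3.
split; first exact: F4.
exact: F5.
Qed.

End Spec.

End PartA.
Import PartA.


Section Helpers.
Variable R : realType.

Lemma CS (I : finType) (f g : I -> R) :
  (\sum_i f i * g i) ^+ 2 <= (\sum_i f i ^+ 2) * (\sum_i g i ^+ 2).
Proof.
set A := \sum_i f i ^+ 2; set B := \sum_i g i ^+ 2; set C := \sum_i f i * g i.
have inner i : \sum_j (f i * g j - f j * g i) ^+ 2
   = f i ^+ 2 * B + g i ^+ 2 * A - 2 * (f i * g i) * C.
  rewrite /A /B /C !mulr_sumr -big_split -sumrB /=; apply: eq_bigr => j _; ring.
have E : \sum_i \sum_j (f i * g j - f j * g i) ^+ 2 = 2 * (A * B) - 2 * C ^+ 2.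
  rewrite (eq_bigr _ (fun i _ => inner i)) sumrB big_split /= -!mulr_suml -mulr_sumr.
  rewrite -/A -/B -/C; ring.
have H : 0 <= \sum_i \sum_j (f i * g j - f j * g i) ^+ 2.
  by apply: sumr_ge0 => i _; apply: sumr_ge0 => j _; apply: sqr_ge0.
move: H; rewrite E; lra.
Qed.

Definition clip (y : R) : R := if y <= -1 then -1 else if 1 <= y then 1 else y.

Lemma clip_cases y : (1 <= y /\ clip y = 1) \/ (y <= -1 /\ clip y = -1) \/
  (-1 <= y <= 1 /\ clip y = y).
Proof.
rewrite /clip; have [h1|h1] := leP y (-1); first by right; left.
have [h2|h2] := leP 1 y; first by left.
by right; right; split => //; apply/andP; lra.
Qed.

Lemma clip_le1 y : `|clip y| <= 1.
Proof.
rewrite ler_norml; case: (clip_cases y) => [[h ->]|[[h ->]|[/andP [h1 h2] ->]]];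
  apply/andP; lra.
Qed.

Lemma clip_close x y : `|x| <= 1 -> (x - clip y) ^+ 2 <= (x - y) ^+ 2.
Proof.
rewrite ler_norml => /andP [h1 h2].
case: (clip_cases y) => [[h ->]|[[h ->]|[/andP [h3 h4] ->]]]; nra.
Qed.

Definition quantM (M : nat) (h x : R) : 'I_(2 * M).+1 :=
  inord (Num.Def.trunc (x / h + M%:R)).
Definition deqM (M : nat) (h : R) (p : 'I_(2 * M).+1) : R :=
  ((p : nat)%:R - M%:R) * h.

Lemma quant_spec M (h Bd x : R) : 0 < h -> Bd / h < M%:R -> `|x| <= Bd ->
  deqM h (quantM M h x) <= x < deqM h (quantM M h x) + h.
Proof.
move=> h0 hM; rewrite ler_norml => /andP [x1 x2].
have y0 : 0 <= x / h + M%:R.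
  have : - (Bd / h) <= x / h by rewrite -mulNr ler_pM2r ?invr_gt0.
  lra.
have /andP [t1 t2] := truncn_itv y0.
set p := Num.Def.trunc _ in t1 t2.
have pM : (p < (2 * M).+1)%N.
  rewrite ltnS -(ler_nat R) natrM.
  have : x / h <= Bd / h by rewrite ler_pM2r ?invr_gt0.
  lra.
rewrite /deqM /quantM -/p inordK //.
have xe : x = (x / h + M%:R - M%:R) * h by rewrite addrK mulfVK // gt_eqF.
apply/andP; split.
  by rewrite [X in _ <= X]xe ler_pM2r //; lra.
rewrite [X in X < _]xe -[X in _ < _ + X]mul1r -mulrDl ltr_pM2r //.
move: t2; rewrite -natr1; lra.
Qed.

Lemma quant_close M (h Bd x : R) : 0 < h -> Bd / h < M%:R -> `|x| <= Bd ->
  `|x - deqM h (quantM M h x)| <= h /\ `|deqM h (quantM M h x)| <= Bd + h.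
Proof.
move=> h0 hM xB; have /andP [q1 q2] := quant_spec h0 hM xB.
move: xB; rewrite !ler_norml => /andP [x1 x2].
split; apply/andP; split; lra.
Qed.

End Helpers.

Lemma sort_labels m (T : finType) (h : 'I_m -> T) :
  exists (pi : {perm 'I_m}) (f : 'I_m -> 'I_#|T|),
    (forall i j : 'I_m, (i <= j)%N -> (f i <= f j)%N) /\
    (forall i i', f i = f i' -> h (pi i) = h (pi i')).
Proof.
pose key i := enum_rank (h i).
pose le := fun i j : 'I_m => (key i <= key j)%N.
pose s := sort le (enum 'I_m).
have ps : perm_eq s (enum 'I_m) by rewrite perm_sort.
have ss : size s = m by rewrite (perm_size ps) size_enum_ord.
pose ts := Tuple (introT eqP ss).
have : perm_eq ts (ord_tuple m) by rewrite /= ps.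
case/tuple_permP => pi Hpi.
have piE i : pi i = nth i s i.
  have Ht : ts = [tuple tnth (ord_tuple m) (pi i) | i < m] by apply: val_inj.
  have := congr1 (fun t : m.-tuple 'I_m => tnth t i) Ht.
  rewrite /= tnth_mktuple tnth_ord_tuple => <-.
  by rewrite (tnth_nth i).
exists pi, (fun i => key (pi i)); split.
  move=> i j ij; rewrite !piE.
  have srt : sorted le s by apply: sort_sorted => x y; exact: leq_total.
  rewrite (set_nth_default i j); last by rewrite ss.
  apply: (sorted_leq_nth (leT := le)) => //.
  - by move=> x y z; apply: leq_trans.
  - by move=> x; apply: leqnn.
  - by rewrite inE ss.
  - by rewrite inE ss.
by move=> i i' /enum_rank_inj.
Qed.

Section Main.
Variable R : realType.

Definition alph (q eps : R) := eps ^+ 5 / (64 * q ^+ 3).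
Definition Mq (q eps : R) : nat := (Num.Def.trunc (alph q eps)^-1).+1.
Definition Lab k (q eps : R) := {ffun 'I_k -> 'I_(2 * Mq q eps).+1 * 'I_(2 * Mq q eps).+1}.

Lemma Mq_gt q eps : (alph q eps)^-1 < (Mq q eps)%:R.
Proof. exact: truncnS_gt. Qed.

Lemma eqle (x y : R) : x = y -> x <= y.
Proof. by move->. Qed.

Lemma sq_le1 (y : R) : 0 <= y -> y ^+ 2 <= 1 -> y <= 1.
Proof. move=> y0 y1; nra. Qed.

Lemma prodq (x xh y yh X0 hx hy Y1 : R) :
  `|x| <= X0 -> `|x - xh| <= hx -> `|y - yh| <= hy -> `|yh| <= Y1 ->
  `|x * y - xh * yh| <= X0 * hy + hx * Y1.
Proof.
move=> h1 h2 h3 h4.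
have -> : x * y - xh * yh = x * (y - yh) + (x - xh) * yh by ring.
apply: le_trans (ler_normD _ _) _; rewrite !normrM.
apply: lerD; apply: ler_pM => //.
Qed.

Lemma sum_const2 m n (c : R) : \sum_(i < m) \sum_(j < n) c = c * (m * n)%:R.
Proof.
under eq_bigr do rewrite sumr_const card_ord.
by rewrite sumr_const card_ord -mulrnA mulr_natr mulnC.
Qed.

Lemma young (x y : R) : (x + y) ^+ 2 <= 23/20 * x ^+ 2 + 23/3 * y ^+ 2.
Proof. have := sqr_ge0 (3 * x - 20 * y); nra. Qed.

Lemma approx_one m n (X : 'M[R]_(m,n)) (q eps : R) :
  (0 < m)%N -> (0 < n)%N -> (forall i j, `|X i j| <= 1) -> 1 <= q ->
  nucnorm X <= q * Num.sqrt (m * n)%:R -> 0 < eps < 1 ->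
  exists (k : nat) (rl : 'I_m -> Lab k q eps) (cl : 'I_n -> Lab k q eps)
         (F : Lab k q eps -> Lab k q eps -> R),
   [/\ 4 * k%:R * eps ^+ 2 <= 5 * q ^+ 2, (forall u v, `|F u v| <= 1) &
       \sum_i \sum_j (X i j - F (rl i) (cl j)) ^+ 2 <= eps ^+ 2 * (m * n)%:R].
Proof.
move=> m0 n0 X1 q1 nucq /andP[e0 e1].
have [d [a [b [d0 [nuc [F1 [F2 [F3 [F4 F5]]]]]]]]] := frame_ex X.
set wa := wco X a in F1 F2 F3 F5 *; set wb := wco X b in F1 F2 F3 F5 *.
have q0 : 0 < q by lra.
set mn := (m * n)%:R.
have mn0 : 0 < mn by rewrite ltr0n muln_gt0 m0 n0.
set s := 4 * eps ^+ 2 / (5 * q).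
have s0 : 0 < s by rewrite /s divr_gt0 // ?mulr_gt0 // exprn_gt0.
pose S := [pred l | s ^+ 2 * mn <= d l].
pose k := #|S|.
have smn0 : 0 < Num.sqrt mn by rewrite sqrtr_gt0.
have rt : Num.sqrt (s ^+ 2 * mn) = s * Num.sqrt mn.
  by rewrite sqrtrM ?sqr_ge0 // sqrtr_sqr ger0_norm // ltW.
have sqmn : Num.sqrt mn * Num.sqrt mn = mn by rewrite -expr2 sqr_sqrtr // ltW.
have Hk : k%:R * s <= q.
  have : k%:R * (s * Num.sqrt mn) <= q * Num.sqrt mn.
    apply: le_trans nucq; rewrite nuc.
    apply: (@le_trans _ _ (\sum_(l in S) Num.sqrt (d l))).
      rewrite mulr_natl -sumr_const.
      by apply: ler_sum => l lS; rewrite -rt ler_sqrt //.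
    rewrite [X in _ <= X](bigID (mem S)) /= lerDl.
    by apply: sumr_ge0 => l _; apply: sqrtr_ge0.
  by rewrite mulrA ler_pM2r.
have HK : 4 * k%:R * eps ^+ 2 <= 5 * q ^+ 2.
  have E : k%:R * s * (5 * q) = 4 * k%:R * eps ^+ 2 by rewrite /s; field; lra.
  rewrite -E; nra.
have E1 : \sum_(l | ~~ S l) d l <= s * q * mn.
  apply: (@le_trans _ _ (\sum_(l | ~~ S l) s * Num.sqrt mn * Num.sqrt (d l))).
    apply: ler_sum => l /negP lS.
    have dl : d l <= s ^+ 2 * mn by rewrite leNgt; apply/negP => h; apply: lS; apply: ltW.
    rewrite -rt -[X in X <= _](sqr_sqrtr (d0 l)) expr2.
    by apply: ler_wpM2r; rewrite ?sqrtr_ge0 // ler_sqrt // mulr_ge0 ?sqr_ge0 // ltW.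
  have H : \sum_(l | ~~ S l) Num.sqrt (d l) <= q * Num.sqrt mn.
    apply: le_trans nucq; rewrite nuc [X in _ <= X](bigID S) /= lerDr.
    by apply: sumr_ge0 => l _; apply: sqrtr_ge0.
  rewrite -mulr_sumr; apply: le_trans (ler_wpM2l _ H) _.
    by rewrite mulr_ge0 // ltW.
  suff -> : s * Num.sqrt mn * (q * Num.sqrt mn) = s * q * (Num.sqrt mn * Num.sqrt mn) by rewrite sqmn.
  ring.
pose L i j := \sum_(l | S l) (wa i l * a l j + wb i l * b l j).
have E2 : \sum_i \sum_j (X i j - L i j) ^+ 2 <= s * q * mn.
  apply: le_trans E1.
  have -> : \sum_(l | ~~ S l) d l = \sum_i \sum_(l | ~~ S l) (wa i l ^+ 2 + wb i l ^+ 2).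
    by rewrite exchange_big /=; apply: eq_bigr => l _; rewrite F2.
  apply: ler_sum => i _.
  have D j : X i j - L i j = \sum_(l | ~~ S l) (wa i l * a l j + wb i l * b l j).
    by rewrite F1 [X in X - _](bigID S) /= /L addrAC subrr add0r.
  under eq_bigr => j _ do rewrite D.
  exact: (F5 i (fun l => ~~ S l)).
have n0r : 0 < (n%:R : R) by rewrite ltr0n.
have m0r : 0 < (m%:R : R) by rewrite ltr0n.
have sXr i : \sum_j X i j ^+ 2 <= n%:R.
  rewrite -[n in X in _ <= X]card_ord -sumr_const.
  apply: ler_sum => j _; rewrite -real_normK ?num_real //.
  by rewrite expr_le1 ?normr_ge0 // X1.
have sXc j : \sum_i X i j ^+ 2 <= m%:R.
  rewrite -[m in X in _ <= X]card_ord -sumr_const.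
  apply: ler_sum => i _; rewrite -real_normK ?num_real //.
  by rewrite expr_le1 ?normr_ge0 // X1.
have sa l : \sum_j a l j ^+ 2 <= 1.
  rewrite -(F4 l); apply: ler_sum => j _; by rewrite lerDl sqr_ge0.
have sb l : \sum_j b l j ^+ 2 <= 1.
  rewrite -(F4 l); apply: ler_sum => j _; by rewrite lerDr sqr_ge0.
have abs_le (x B : R) : 0 <= B -> x ^+ 2 <= B ^+ 2 -> `|x| <= B.
  move=> B0 h; rewrite -(ger0_norm B0) -ler_sqr ?normr_ge0 //.
  by rewrite !real_normK ?num_real.
have Bwa i l : `|wa i l| <= Num.sqrt n%:R.
  apply: abs_le; first exact: sqrtr_ge0.
  rewrite sqr_sqrtr ?ler0n //; apply: le_trans (CS _ _) _.
  by rewrite -[n%:R]mulr1; apply: ler_pM; rewrite ?sumr_ge0 // => *; rewrite sqr_ge0.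
have Bwb i l : `|wb i l| <= Num.sqrt n%:R.
  apply: abs_le; first exact: sqrtr_ge0.
  rewrite sqr_sqrtr ?ler0n //; apply: le_trans (CS _ _) _.
  by rewrite -[n%:R]mulr1; apply: ler_pM; rewrite ?sumr_ge0 // => *; rewrite sqr_ge0.
pose B0 := (s * Num.sqrt n%:R)^-1.
have sn0 : 0 < s * Num.sqrt n%:R by rewrite mulr_gt0 // sqrtr_gt0.
have B00 : 0 < B0 by rewrite invr_gt0.
have colb (c : R) l : S l -> (c * d l) ^+ 2 <= m%:R * d l -> `|c| <= B0.
  rewrite /S inE /= => Sl h.
  have dl0 : 0 < d l by apply: lt_le_trans Sl; rewrite mulr_gt0 // exprn_gt0.
  have h1 : c ^+ 2 * d l <= m%:R.
    by rewrite -(ler_pM2r dl0) -mulrA -expr2 -exprMn.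
  have h2 : c ^+ 2 * (s ^+ 2 * mn) <= m%:R.
    by apply: le_trans h1; apply: ler_wpM2l; rewrite ?sqr_ge0.
  have h3 : (`|c| * (s * Num.sqrt n%:R)) ^+ 2 <= 1.
    rewrite exprMn real_normK ?num_real // exprMn sqr_sqrtr ?ler0n //.
    rewrite -(ler_pM2r m0r) mul1r; apply: le_trans h2 => /=.
    by rewrite /mn natrM; apply: eqle; ring.
  rewrite /B0 -(ler_pM2r sn0) mulVf ?gt_eqF //.
  by apply: sq_le1 => //; rewrite mulr_ge0 ?normr_ge0 // ltW.
have Ba l j : S l -> `|a l j| <= B0.
  move=> Sl; apply: (colb _ l Sl); rewrite -(proj1 (F3 j l)).
  apply: le_trans (CS _ _) _; apply: ler_pM; rewrite ?sumr_ge0 // => *; rewrite ?sqr_ge0 //.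
  rewrite -F2; apply: ler_sum => i _; by rewrite lerDl sqr_ge0.
have Bb l j : S l -> `|b l j| <= B0.
  move=> Sl; apply: (colb _ l Sl); rewrite -(proj2 (F3 j l)).
  apply: le_trans (CS _ _) _; apply: ler_pM; rewrite ?sumr_ge0 // => *; rewrite ?sqr_ge0 //.
  rewrite -F2; apply: ler_sum => i _; by rewrite lerDr sqr_ge0.
set α := alph q eps.
have α0 : 0 < α by rewrite /α /alph divr_gt0 ?exprn_gt0 // mulr_gt0 // exprn_gt0.
have α1 : α <= 1 / 64.
  rewrite /α /alph ler_pdivrMr ?mulr_gt0 ?exprn_gt0 //.
  have : eps ^+ 5 <= 1 by rewrite exprn_ile1 // ltW.
  have : 1 <= q ^+ 3 by rewrite exprn_ege1.
  lra.
set M := Mq q eps.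
have MG : α^-1 < M%:R := Mq_gt q eps.
have sqn0 : 0 < Num.sqrt (n%:R : R) by rewrite sqrtr_gt0.
pose hr := α * Num.sqrt n%:R.
pose hc := α * B0.
have hr0 : 0 < hr by rewrite mulr_gt0.
have hc0 : 0 < hc by rewrite mulr_gt0.
have hrM : Num.sqrt n%:R / hr < M%:R.
  by rewrite /hr invfM mulrCA divff ?mulr1 // gt_eqF.
have hcM : B0 / hc < M%:R.
  by rewrite /hc invfM mulrCA divff ?mulr1 // gt_eqF.
pose idx (r : 'I_k) : 'I_n := @enum_val _ S r.
pose rl (i : 'I_m) : Lab k q eps :=
  [ffun r => (quantM M hr (wa i (idx r)), quantM M hr (wb i (idx r)))].
pose cl (j : 'I_n) : Lab k q eps :=
  [ffun r => (quantM M hc (a (idx r) j), quantM M hc (b (idx r) j))].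
pose Fs (u v : Lab k q eps) := \sum_r (deqM hr (u r).1 * deqM hc (v r).1 + deqM hr (u r).2 * deqM hc (v r).2).
exists k, rl, cl, (fun u v => clip (Fs u v)); split => //.
  by move=> u v; apply: clip_le1.
have Pt i j : `|L i j - Fs (rl i) (cl j)| <= eps / 10.
  rewrite /L (big_enum_val (A := S)) /Fs -sumrB.
  apply: le_trans (ler_norm_sum _ _ _) _.
  apply: (@le_trans _ _ (\sum_(r < k) (2 * (α * (2 + α) / s)))).
    apply: ler_sum => r _; rewrite !ffunE /=.
    have Sl : S (idx r) := enum_valP r.
    move: Sl; set l := idx r => Sl.
    have [qa1 qa2] := quant_close hr0 hrM (Bwa i l).
    have [qb1 qb2] := quant_close hr0 hrM (Bwb i l).
    have [qc1 qc2] := quant_close hc0 hcM (Ba l j Sl).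
    have [qd1 qd2] := quant_close hc0 hcM (Bb l j Sl).
    have t1 := prodq (Bwa i l) qa1 qc1 qc2.
    have t2 := prodq (Bwb i l) qb1 qd1 qd2.
    have E : Num.sqrt n%:R * hc + hr * (B0 + hc) = α * (2 + α) / s.
      rewrite /hc /hr /B0; field; apply/andP; split; rewrite gt_eqF //.
    rewrite E in t1 t2.
    rewrite opprD addrACA; apply: le_trans (ler_normD _ _) _.
    rewrite mulr2n mulrDl mul1r; exact: lerD.
  rewrite sumr_const card_ord -(mulr_natl _ k).
  have kq : k%:R <= q / s by rewrite ler_pdivlMr.
  have c0 : 0 <= 2 * (α * (2 + α) / s) by apply: mulr_ge0 => //; apply: mulr_ge0; [apply: mulr_ge0; lra | rewrite invr_ge0; lra].
  apply: le_trans (ler_wpM2r c0 kq) _.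
  have E : q / s * (2 * (α * (2 + α) / s)) = 25 * eps / 512 * (2 + α).
    rewrite /α /alph /s; field.
    by rewrite !gt_eqF.
  rewrite E; nra.
apply: (@le_trans _ _ (\sum_i \sum_j (23/20 * (X i j - L i j) ^+ 2
                        + 23/3 * (L i j - Fs (rl i) (cl j)) ^+ 2))).
  apply: ler_sum => i _; apply: ler_sum => j _.
  apply: le_trans (clip_close _ (X1 i j)) _.
  have -> : X i j - Fs (rl i) (cl j) = (X i j - L i j) + (L i j - Fs (rl i) (cl j))
    by rewrite addrA subrK.
  exact: young.
under eq_bigr do rewrite big_split /= -!mulr_sumr.
rewrite big_split /= -!mulr_sumr.
have H2 : \sum_i \sum_j (L i j - Fs (rl i) (cl j)) ^+ 2 <= (eps / 10) ^+ 2 * mn.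
  rewrite /mn -sum_const2; apply: ler_sum => i _; apply: ler_sum => j _.
  have := Pt i j; rewrite ler_norml => /andP [h1 h2]; nra.
have sq : s * q * mn = 4 / 5 * (eps ^+ 2 * mn) by rewrite /s; field; rewrite gt_eqF.
have sq2 : (eps / 10) ^+ 2 * mn = 1 / 100 * (eps ^+ 2 * mn) by field.
have t0 : 0 <= eps ^+ 2 * mn by rewrite mulr_ge0 ?sqr_ge0 // ltW.
rewrite sq in E2; rewrite sq2 in H2.
lra.
Qed.

End Main.

Section Fin.
Variable R : realType.

Lemma maxnorm_le m n (X : 'M[R]_(m,n)) i j : `|X i j| <= maxnorm X.
Proof.
rewrite /maxnorm; apply: le_trans (le_bigmax _ _ i).
exact: (le_bigmax _ (fun j => `|X i j|) j).
Qed.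

Lemma maxnorm_ub m n (X : 'M[R]_(m,n)) c :
  0 <= c -> (forall i j, `|X i j| <= c) -> maxnorm X <= c.
Proof.
move=> c0 h; rewrite /maxnorm; apply: bigmax_le => // i _.
by apply: bigmax_le => // j _.
Qed.

Lemma sum_perm m (pi : {perm 'I_m}) (G : 'I_m -> R) : \sum_i G (pi i) = \sum_i G i.
Proof. by rewrite [RHS](reindex_inj (@perm_inj _ pi)). Qed.

Lemma Gbound (q eps : R) : 1 <= q -> 0 < eps < 1 ->
  (((2 * Mq q eps).+1 * (2 * Mq q eps).+1)%N%:R : R) <= 20000 * q ^+ 6 * eps ^- 10.
Proof.
move=> q1 /andP [e0 e1].
set a := alph q eps.
have MG : (Mq q eps)%:R <= a^-1 + 1.
  rewrite /Mq -natr1 lerD2r truncn_le invr_ge0 /a /alph ltW //.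
  by rewrite divr_gt0 ?exprn_gt0 // mulr_gt0 ?exprn_gt0 //; lra.
set x := q ^+ 3 / eps ^+ 5.
have x1 : 1 <= x.
  rewrite /x ler_pdivlMr ?exprn_gt0 // mul1r.
  have : eps ^+ 5 <= 1 by rewrite exprn_ile1 // ltW.
  have : 1 <= q ^+ 3 by rewrite exprn_ege1.
  lra.
have ax : a^-1 = 64 * x.
  rewrite /a /alph /x invf_div; field; rewrite gt_eqF ?exprn_gt0 //.
have G1 : (((2 * Mq q eps).+1)%:R : R) <= 131 * x.
  rewrite -natr1 natrM; move: MG; rewrite ax; lra.
have -> : 20000 * q ^+ 6 * eps ^- 10 = 20000 * x ^+ 2.
  rewrite /x; field; rewrite gt_eqF ?exprn_gt0 //.
rewrite natrM.
have G0 : 0 <= (((2 * Mq q eps).+1)%:R : R) by [].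
nra.
Qed.

Lemma count_bound (q eps : R) (kX kY : nat) : 1 <= q -> 0 < eps < 1 ->
  4 * kX%:R * eps ^+ 2 <= 5 * q ^+ 2 -> 4 * kY%:R * eps ^+ 2 <= 5 * q ^+ 2 ->
  ((((2 * Mq q eps).+1 * (2 * Mq q eps).+1) ^ kX * ((2 * Mq q eps).+1 * (2 * Mq q eps).+1) ^ kY) *
   (((2 * Mq q eps).+1 * (2 * Mq q eps).+1) ^ kX * ((2 * Mq q eps).+1 * (2 * Mq q eps).+1) ^ kY))%N%:R
  <= powR (20000 * q ^+ 6 * eps ^- 10) (5 * q ^+ 2 * eps ^- 2).
Proof.
move=> q1 e01 hX hY; have /andP [e0 e1] := e01.
have Gb := Gbound q1 e01.
set GG := ((2 * Mq q eps).+1 * (2 * Mq q eps).+1)%N in Gb *.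
set base := 20000 * q ^+ 6 * eps ^- 10 in Gb *.
have G1 : 1 <= (GG%:R : R) by rewrite ler1n /GG muln_gt0.
rewrite -!expnD natrX.
apply: (@le_trans _ _ (base ^+ (kX + kY + (kX + kY)))).
  by apply: lerXn2r; rewrite // nnegrE; lra.
rewrite -powR_mulrn; last lra.
apply: ler_powR; first lra.
rewrite !natrD ler_pdivlMr ?exprn_gt0 //.
lra.
Qed.

Lemma fbar_bound m n (X : 'M[R]_(m,n)) (pi : {perm 'I_m}) (tau : {perm 'I_n})
  (T1 T2 : Type) (rl : 'I_m -> T1) (cl : 'I_n -> T2) (F : T1 -> T2 -> R) (eps : R) :
  0 < eps -> \sum_i \sum_j (X i j - F (rl i) (cl j)) ^+ 2 <= eps ^+ 2 * (m * n)%:R ->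
  fbarnorm (permmx X pi tau - \matrix_(i, j) F (rl (pi i)) (cl (tau j))) <= eps.
Proof.
move=> e0 hS; rewrite /fbarnorm.
have -> : \sum_i \sum_j (permmx X pi tau - \matrix_(i, j) F (rl (pi i)) (cl (tau j))) i j ^+ 2
        = \sum_i \sum_j (X i j - F (rl i) (cl j)) ^+ 2.
  transitivity (\sum_i \sum_j (X (pi i) (tau j) - F (rl (pi i)) (cl (tau j))) ^+ 2).
    by apply: eq_bigr => i _; apply: eq_bigr => j _; rewrite !mxE.
  transitivity (\sum_i \sum_j (X (pi i) j - F (rl (pi i)) (cl j)) ^+ 2).
    by apply: eq_bigr => i _; apply: (sum_perm tau (fun j => (X (pi i) j - F (rl (pi i)) (cl j)) ^+ 2)).
  exact: (sum_perm pi (fun i => \sum_j (X i j - F (rl i) (cl j)) ^+ 2)).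
rewrite -[X in _ <= X](ger0_norm (ltW e0)) -sqrtr_sqr ler_sqrt ?sqr_ge0 //.
have [->|mn0] := eqVneq (m * n)%N 0%N; first by rewrite invr0 mul0r sqr_ge0.
have mnp : 0 < ((m * n)%N%:R : R) by rewrite ltr0n lt0n.
by rewrite ler_pdivrMl // mulrC.
Qed.

End Fin.

Unset Implicit Arguments.

Theorem lemma7p2 (R : realType) (m n : nat) (X Y : 'M[R]_(m, n)) (q eps : R) :
  maxnorm X <= 1 -> maxnorm Y <= 1 ->
  1 <= q ->
  nucnorm X <= q * Num.sqrt (m * n)%:R ->
  nucnorm Y <= q * Num.sqrt (m * n)%:R ->
  0 < eps < 1 ->
  exists (A B : 'M[R]_(m, n)) (pi : {perm 'I_m}) (tau : {perm 'I_n}),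
    [/\ simul_block_structure A B
          (powR (20000 * q ^+ 6 * eps ^- 10) (5 * q ^+ 2 * eps ^- 2)),
        fbarnorm (permmx X pi tau - A) <= eps,
        fbarnorm (permmx Y pi tau - B) <= eps,
        maxnorm A <= 1 & maxnorm B <= 1].
Proof.
move=> HX HY q1 nX nY e01; have /andP [e0 e1] := e01.
have X1 i j : `|X i j| <= 1 := le_trans (maxnorm_le X i j) HX.
have Y1 i j : `|Y i j| <= 1 := le_trans (maxnorm_le Y i j) HY.
set N := powR _ _.
have N0 : 0 <= N := powR_ge0 _ _.
have [mn0|mn0] := eqVneq (m * n)%N 0%N.
  exists 0, 0, 1%g, 1%g; split.
  - exists m, n, id, id; split => //.
      by move=> i i' j j' -> ->.
    by rewrite mn0.
  - by rewrite /fbarnorm mn0 invr0 mul0r sqrtr0 ltW.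
  - by rewrite /fbarnorm mn0 invr0 mul0r sqrtr0 ltW.
  - by apply: maxnorm_ub => // i j; rewrite mxE normr0.
  - by apply: maxnorm_ub => // i j; rewrite mxE normr0.
have m0 : (0 < m)%N by move: mn0; rewrite muln_eq0 negb_or lt0n => /andP [].
have n0 : (0 < n)%N by move: mn0; rewrite muln_eq0 negb_or lt0n => /andP [].
have [kX [rlX [clX [FX [kXb FX1 FXs]]]]] := approx_one m0 n0 X1 q1 nX e01.
have [kY [rlY [clY [FY [kYb FY1 FYs]]]]] := approx_one m0 n0 Y1 q1 nY e01.
have [pi [f [fmono fh]]] := sort_labels (fun i => (rlX i, rlY i)).
have [tau [g [gmono gh]]] := sort_labels (fun j => (clX j, clY j)).
exists (\matrix_(i, j) FX (rlX (pi i)) (clX (tau j))),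
       (\matrix_(i, j) FY (rlY (pi i)) (clY (tau j))), pi, tau; split.
- exists _, _, f, g; split => //.
    move=> i i' j j' /fh [e2 e3] /gh [e4 e5].
    by rewrite !mxE e2 e3 e4 e5.
  rewrite !card_prod !card_ffun !card_prod !card_ord.
  exact: count_bound.
- exact: (fbar_bound pi tau e0 FXs).
- exact: (fbar_bound pi tau e0 FYs).
- by apply: maxnorm_ub => // i j; rewrite mxE FX1.
- by apply: maxnorm_ub => // i j; rewrite mxE FY1.
Qed.
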